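(* Let $\Lambda\subset H^0(\mathbb{P}^r,\mathcal{O}_{\mathbb{P}^r}(2))$ be a linear system of quadrics with $\dim\Lambda=\alpha+1$, let $\Phi:\mathbb{P}^r\dashrightarrow\mathbb{P}^\alpha$ be the associated rational map, and let $X$ be the base scheme of $\Lambda$. Let $W\subset G(1,r)$ be the Zariski closure of the set of lines $L\subset\mathbb{P}^r$ with $L\cap X=\emptyset$ for which $\Phi_{|L}:L\to\Phi(L)$ is a double covering of a line. Then $W=\emptyset$ if and only if all fibres of $\Phi$ are linear spaces.
   Context: Over $\mathbb{C}$. The fibre of $\Phi$ through $P\in\mathbb{P}^r\setminus X$ means the Zariski closure $\overline{\Phi^{-1}(\Phi(P))}$. $G(1,r)$ is the Grassmannian of lines in $\mathbb{P}^r$. *)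

(* Defs.v *)
From HB Require Import structures.
From mathcomp Require Import all_boot all_order all_algebra.
From mathcomp Require Import reals.
From mathcomp.real_closed Require Import complex.
From mathcomp Require Import mpoly.
Import GRing.Theory Num.Theory.

Set Implicit Arguments.
Unset Strict Implicit.
Unset Printing Implicit Defensive.

Local Open Scope ring_scope.

(* The ground field is C, modelled as R[i] for R : realType (any realType is
   isomorphic to the real numbers).  A point of P^(n-1) is represented by a
   nonzero row vector of 'rV[R[i]]_n, up to nonzero scalars. *)

Definition proj_eq (R : realType) (k : nat) (u v : 'rV[R[i]]_k) : Prop :=
  exists2 c : R[i], c != 0 & v = c *: u.

Definition qform (R : realType) (n : nat) (A : 'M[R[i]]_n) (x : 'rV[R[i]]_n) : R[i] :=
  (x *m A *m x^T) 0 0.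

(* Lambda is spanned by the quadrics q_0..q_alpha (given by matrices A j);
   Phi = [q_0 : ... : q_alpha] is the associated rational map. *)
Definition Phi (R : realType) (n m : nat) (A : 'I_m -> 'M[R[i]]_n)
  (x : 'rV[R[i]]_n) : 'rV[R[i]]_m := \row_j qform (A j) x.

(* the quadrics q_j are linearly independent, i.e. dim Lambda = m *)
Definition lin_indep_quadrics (R : realType) (n m : nat) (A : 'I_m -> 'M[R[i]]_n) : Prop :=
  forall c : 'I_m -> R[i],
    (forall x : 'rV[R[i]]_n, \sum_(j < m) c j * qform (A j) x = 0) ->
    forall j, c j = 0.

(* Zariski closure in P^(n-1) of a (scale invariant) set S of points:
   the points where every polynomial vanishing on (the cone over) S vanishes,
   i.e. V(I(S)). *)
Definition zclosure (R : realType) (n : nat) (S : 'rV[R[i]]_n -> Prop)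
  (x : 'rV[R[i]]_n) : Prop :=
  forall p : {mpoly R[i][n]},
    (forall y : 'rV[R[i]]_n, y != 0 -> S y -> p.@[fun k => y 0 k] = 0) ->
    p.@[fun k => x 0 k] = 0.

(* fibre of Phi through P (P outside the base locus X):
   Zariski closure of Phi^-1(Phi(P)) *)
Definition fibre (R : realType) (n m : nat) (A : 'I_m -> 'M[R[i]]_n)
  (P : 'rV[R[i]]_n) : 'rV[R[i]]_n -> Prop :=
  zclosure (fun Q => Phi A Q != 0 /\ proj_eq (Phi A P) (Phi A Q)).

Definition is_linear_space (R : realType) (n : nat) (F : 'rV[R[i]]_n -> Prop) : Prop :=
  exists V : 'M[R[i]]_n, forall x, x != 0 -> (F x <-> (x <= V)%MS).

(* Lines of P^(n-1) are given by pairs (u, v) of independent vectors,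
   L = P(span(u,v)); x is on L iff x lies in the row space of col_mx u v. *)
Definition is_line (R : realType) (n : nat) (u v : 'rV[R[i]]_n) : Prop :=
  \rank (col_mx u v) = 2%N.

(* L cap X = emptyset, X the base locus of Lambda *)
Definition line_misses_base (R : realType) (n m : nat) (A : 'I_m -> 'M[R[i]]_n)
  (u v : 'rV[R[i]]_n) : Prop :=
  forall x, x != 0 -> (x <= col_mx u v)%MS -> Phi A x != 0.

Definition two_preimages (R : realType) (n m : nat) (A : 'I_m -> 'M[R[i]]_n)
  (u v : 'rV[R[i]]_n) (y : 'rV[R[i]]_m) : Prop :=
  exists x1 x2 : 'rV[R[i]]_n,
    [/\ x1 != 0, x2 != 0, (x1 <= col_mx u v)%MS, (x2 <= col_mx u v)%MS &
     [/\ ~ proj_eq x1 x2, proj_eq y (Phi A x1), proj_eq y (Phi A x2) &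
      forall x, x != 0 -> (x <= col_mx u v)%MS -> proj_eq y (Phi A x) ->
        proj_eq x1 x \/ proj_eq x2 x]].

(* Phi_|L : L -> Phi(L) is a double covering of a line: Phi(L) is a line
   P(span(w1,w2)) of P^alpha and, outside finitely many points of it, each
   fibre of Phi_|L has exactly two points (degree 2). *)
Definition double_cover_of_line (R : realType) (n m : nat) (A : 'I_m -> 'M[R[i]]_n)
  (u v : 'rV[R[i]]_n) : Prop :=
  exists w1 w2 : 'rV[R[i]]_m,
    [/\ \rank (col_mx w1 w2) = 2%N,
     (forall x, x != 0 -> (x <= col_mx u v)%MS -> (Phi A x <= col_mx w1 w2)%MS),
     (forall y, y != 0 -> (y <= col_mx w1 w2)%MS ->
        exists x, [/\ x != 0, (x <= col_mx u v)%MS & proj_eq y (Phi A x)]) &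
     exists E : seq 'rV[R[i]]_m,
       forall y, y != 0 -> (y <= col_mx w1 w2)%MS ->
         (forall e, e \in E -> ~ proj_eq e y) -> two_preimages A u v y].

Definition good_line (R : realType) (n m : nat) (A : 'I_m -> 'M[R[i]]_n)
  (u v : 'rV[R[i]]_n) : Prop :=
  [/\ is_line u v, line_misses_base A u v & double_cover_of_line A u v].

(* Pluecker coordinates of the line spanned by u, v (all p_ij = u_i v_j - u_j v_i,
   arranged as a vector of length n*n) *)
Definition pluecker (R : realType) (n : nat) (u v : 'rV[R[i]]_n) : 'rV[R[i]]_(n * n) :=
  mxvec (u^T *m v - v^T *m u).

(* W = Zariski closure in G(1, n-1) (via the Pluecker embedding) of the good lines *)
Definition in_W (R : realType) (n m : nat) (A : 'I_m -> 'M[R[i]]_n)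
  (u v : 'rV[R[i]]_n) : Prop :=
  is_line u v /\
  forall p : {mpoly R[i][n * n]},
    (forall u' v', good_line A u' v' -> p.@[fun k => pluecker u' v' 0 k] = 0) ->
    p.@[fun k => pluecker u v 0 k] = 0.

(* Main.v *)
Require Import Defs.
From HB Require Import structures.
From mathcomp Require Import all_boot all_order all_algebra.
From mathcomp Require Import reals.
From mathcomp.real_closed Require Import complex.
From mathcomp Require Import mpoly.
From mathcomp Require Import ring.
From Stdlib Require Import Classical.
Import GRing.Theory Num.Theory.
Set Implicit Arguments.
Unset Strict Implicit.
Unset Printing Implicit Defensive.
Local Open Scope ring_scope.

Lemma quad_id (F : fieldType) (a' b' e sg : F) : b' != 0 -> (2:F) != 0 -> (4:F) != 0 ->
  b' * sg ^+ 2 - a' * sg + (a' ^+ 2 - e ^+ 2) / (2 * 2 * b') =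
  b' * (sg - (a' + e) / (2 * b')) * (sg - (a' - e) / (2 * b')).
Proof. by move=> h h2 h4; field; rewrite h h2 h4. Qed.

Section Main.
Variable R : realType.
Local Notation K := (R[i]).

Lemma poly_all0 (p : {poly K}) : (forall x, p.[x] = 0) -> p = 0.
Proof.
move=> h; apply: (@roots_geq_poly_eq0 _ p [seq i%:R | i <- iota 0 (size p)]).
- by apply/allP => x /mapP [j _ ->]; apply/rootP.
- rewrite map_inj_uniq ?iota_uniq // => a b /eqP; rewrite eqr_nat => /eqP //.
- by rewrite size_map size_iota.
Qed.

Definition indep n (u v : 'rV[K]_n) := forall s t, s *: u + t *: v = 0 -> s = 0 /\ t = 0.

Lemma mul_rowcol2 n (D : 'M[K]_(1, 1 + 1)) (u v : 'rV[K]_n) :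
  D *m col_mx u v = (lsubmx D 0 0) *: u + (rsubmx D 0 0) *: v.
Proof.
by rewrite -{1}[D]hsubmxK mul_row_col {1}(mx11_scalar (lsubmx D))
  {1}(mx11_scalar (rsubmx D)) !mul_scalar_mx.
Qed.

Lemma indepP n (u v : 'rV[K]_n) : \rank (col_mx u v) = 2%N <-> indep u v.
Proof.
split.
- move=> hr s t e.
  have hf : row_free (col_mx u v) by rewrite /row_free hr.
  have := mulmx_free_eq0 (row_mx (s%:M : 'M_1) (t%:M : 'M_1)) hf.
  rewrite mul_rowcol2 row_mxKl row_mxKr !mxE /= !mulr1n e eqxx => /esym/eqP.
  move=> /matrixP h; split.
  + by have := h 0 (lshift 1 0); rewrite row_mxEl !mxE /= ?mulr1n.
  + by have := h 0 (rshift 1 0); rewrite row_mxEr !mxE /= ?mulr1n.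
- move=> hi; apply/eqP; rewrite -[2%N]/(1 + 1)%N; apply: inj_row_free => w.
  rewrite mul_rowcol2 => /hi [h1 h2].
  by rewrite -[w]hsubmxK (mx11_scalar (lsubmx w)) (mx11_scalar (rsubmx w)) h1 h2
     !raddf0 row_mx0.
Qed.

Lemma sub_col2P n (x u v : 'rV[K]_n) :
  (x <= col_mx u v)%MS <-> exists s t, x = s *: u + t *: v.
Proof.
split.
- by move=> /submxP [D ->]; rewrite mul_rowcol2; eexists; eexists.
- move=> [s [t ->]]; apply: addmx_sub; apply: scalemx_sub.
  + by have := submxMl (row_mx (1%:M : 'M_1) 0) (col_mx u v);
      rewrite mul_row_col mul1mx mul0mx addr0.
  + by have := submxMl (row_mx 0 (1%:M : 'M_1)) (col_mx u v);
      rewrite mul_row_col mul1mx mul0mx add0r.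
Qed.

Lemma indep_coef n (u v : 'rV[K]_n) s t s' t' : indep u v ->
  s *: u + t *: v = s' *: u + t' *: v -> s = s' /\ t = t'.
Proof.
move=> hi e; have /hi [] : (s - s') *: u + (t - t') *: v = 0.
  by rewrite !scalerBl addrACA -opprD e subrr.
by move=> /eqP; rewrite subr_eq0 => /eqP -> /eqP; rewrite subr_eq0 => /eqP ->.
Qed.


Definition bil n (M : 'M[K]_n) (x z : 'rV[K]_n) : K := (x *m M *m z^T) 0 0.

Definition Bf n m (A : 'I_m -> 'M[K]_n) (x z : 'rV[K]_n) : 'rV[K]_m :=
  \row_j (bil (A j) x z + bil (A j) z x).

Lemma qform_comb n (M : 'M[K]_n) (x z : 'rV[K]_n) s t :
  qform M (s *: x + t *: z) =
  s ^+ 2 * qform M x + s * t * (bil M x z + bil M z x) + t ^+ 2 * qform M z.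
Proof.
rewrite /qform /bil.
have -> : (s *: x + t *: z)^T = s *: x^T + t *: z^T by apply/matrixP => i k; rewrite !mxE.
rewrite !mulmxDl !mulmxDr -!scalemxAl -!scalemxAr.
move: (x *m M *m x^T) (x *m M *m z^T) (z *m M *m x^T) (z *m M *m z^T)
  => p1 p2 p3 p4.
rewrite !mxE; ring.
Qed.

Lemma Phi_comb n m (A : 'I_m -> 'M[K]_n) (x z : 'rV[K]_n) s t :
  Phi A (s *: x + t *: z) =
  (s ^+ 2) *: Phi A x + (s * t) *: Bf A x z + (t ^+ 2) *: Phi A z.
Proof. by apply/rowP => j; rewrite !mxE qform_comb. Qed.

Lemma Phi_scale n m (A : 'I_m -> 'M[K]_n) (x : 'rV[K]_n) c :
  Phi A (c *: x) = (c ^+ 2) *: Phi A x.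
Proof.
have := Phi_comb A x 0 c 0; rewrite scaler0 addr0 => ->.
by rewrite mulr0 scale0r expr0n /= scale0r !addr0.
Qed.

Lemma Phi0 n m (A : 'I_m -> 'M[K]_n) : Phi A 0 = 0.
Proof. by have := Phi_scale A 0 0; rewrite scaler0 expr0n /= scale0r. Qed.


Lemma sub_line n (u v : 'rV[K]_n) s t : ((s *: u + t *: v)%R <= col_mx u v)%MS.
Proof.
apply: addmx_sub; apply: scalemx_sub.
+ by have := submxMl (row_mx (1%:M : 'M_1) 0) (col_mx u v);
    rewrite mul_row_col mul1mx mul0mx addr0.
+ by have := submxMl (row_mx 0 (1%:M : 'M_1)) (col_mx u v);
    rewrite mul_row_col mul1mx mul0mx add0r.
Qed.

Lemma indep_neq0l n (u v : 'rV[K]_n) : indep u v -> u != 0.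
Proof.
move=> hi; apply/eqP => u0; have := hi 1 0; rewrite u0 scaler0 scale0r addr0 => /(_ erefl).
by case => /eqP; rewrite oner_eq0.
Qed.

Lemma indep_sym n (u v : 'rV[K]_n) : indep u v -> indep v u.
Proof. by move=> hi s t e; have [] := hi t s; [rewrite addrC|move=> -> ->]. Qed.

Section GoodLine.
Variables (n m : nat) (A : 'I_m -> 'M[K]_n) (x1 x2 : 'rV[K]_n) (g : K).
Hypotheses (hind : indep x1 x2) (ha : Phi A x1 != 0) (hg : g != 0)
  (h2 : Phi A x2 = g *: Phi A x1) (hb : ~ exists c, Bf A x1 x2 = c *: Phi A x1).
Local Notation a := (Phi A x1).
Local Notation b := (Bf A x1 x2).

Lemma indab : indep a b.
Proof.
move=> s t e; case: (eqVneq t 0) => [t0|tn0].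
  move: e; rewrite t0 scale0r addr0 => /eqP; rewrite scaler_eq0 (negbTE ha) orbF.
  by move=> /eqP.
exfalso; apply: hb; exists (- (t^-1 * s)).
have -> : b = t^-1 *: (t *: b) by rewrite scalerA mulVf // scale1r.
move/eqP: e; rewrite addrC addr_eq0 => /eqP ->.
by rewrite scalerN scalerA scaleNr.
Qed.

Lemma PhiL s t : Phi A (s *: x1 + t *: x2) = (s ^+ 2 + g * t ^+ 2) *: a + (s * t) *: b.
Proof. by rewrite Phi_comb h2 scalerA scalerDl (mulrC g) addrAC. Qed.

Lemma misses : line_misses_base A x1 x2.
Proof.
move=> x xn0 /sub_col2P [s [t ex]]; move: xn0; rewrite ex PhiL => xn0.
apply/eqP => /indab [e1 /eqP]; rewrite mulf_eq0 => /orP [] /eqP st0;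
  move: e1 xn0; rewrite st0 expr0n /= ?add0r ?addr0.
- move=> /eqP; rewrite mulf_eq0 (negbTE hg) /= expf_eq0 /= => /eqP ->.
  by rewrite !scale0r addr0 eqxx.
- rewrite mulr0 addr0 => /eqP; rewrite expf_eq0 /= => /eqP ->.
  by rewrite !scale0r addr0 eqxx.
Qed.

Lemma two_neq0 : (2 : K) != 0. Proof. by rewrite pnatr_eq0. Qed.
Lemma four_neq0 : (4 : K) != 0. Proof. by rewrite pnatr_eq0. Qed.

Lemma root_sol (a' b' sg : K) : b' != 0 -> b' * sg ^+ 2 - a' * sg + b' * g = 0 ->
  sg != 0 /\ Phi A (sg *: x1 + x2) = (sg / b') *: (a' *: a + b' *: b).
Proof.
move=> hb' hr; split.
  apply/eqP => s0; move: hr; rewrite s0 expr0n /= !mulr0 subr0 add0r => /eqP.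
  by rewrite mulf_eq0 (negbTE hb') (negbTE hg).
have := PhiL sg 1; rewrite scale1r => ->.
rewrite scalerDr !scalerA expr1n !mulr1.
congr (_ *: _ + _ *: _); last by field.
apply: (mulfI hb').
have -> : b' * (sg / b' * a') = a' * sg by field.
by apply/eqP; rewrite -subr_eq0; apply/eqP; rewrite -hr; ring.
Qed.

Lemma root_formula (a' b' e : K) : b' != 0 -> e ^+ 2 = a' ^+ 2 - 4 * b' ^+ 2 * g ->
  b' * ((a' + e) / (2 * b')) ^+ 2 - a' * ((a' + e) / (2 * b')) + b' * g = 0.
Proof.
move=> hb' he; have h2n := two_neq0.
set sg := (a' + e) / (2 * b').
have h1 : 2 * b' * sg - a' = e by rewrite /sg; field.
have h3 : 4 * b' * (b' * sg ^+ 2 - a' * sg + b' * g) =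
  (2 * b' * sg - a') ^+ 2 - (a' ^+ 2 - 4 * b' ^+ 2 * g) by ring.
move: h3; rewrite h1 -he subrr => /eqP; rewrite !mulf_eq0 (negbTE hb') orbF.
by rewrite (negbTE four_neq0) /= => /eqP.
Qed.

Lemma quad_factor (a' b' e sg : K) : b' != 0 -> e ^+ 2 = a' ^+ 2 - 4 * b' ^+ 2 * g ->
  b' * sg ^+ 2 - a' * sg + b' * g =
  b' * (sg - (a' + e) / (2 * b')) * (sg - (a' - e) / (2 * b')).
Proof.
move=> hb' he; have h2n := two_neq0.
have -> : b' * g = (a' ^+ 2 - e ^+ 2) / (2 * 2 * b').
  by rewrite he; field; rewrite ?hb' ?two_neq0 ?four_neq0.
exact: (@quad_id _ a' b' e sg hb' two_neq0 four_neq0).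
Qed.

Lemma x1n0 : x1 != 0. Proof. exact: indep_neq0l hind. Qed.
Lemma x2n0 : x2 != 0. Proof. exact: indep_neq0l (indep_sym hind). Qed.

Lemma comb_n0 (sg : K) : sg *: x1 + x2 != 0.
Proof.
apply/eqP => e; have [_ /eqP] : sg = 0 /\ (1:K) = 0 by apply: hind; rewrite scale1r e.
by rewrite oner_eq0.
Qed.

Lemma comb_sub (sg : K) : ((sg *: x1 + x2)%R <= col_mx x1 x2)%MS.
Proof. by have := sub_line x1 x2 sg 1; rewrite scale1r. Qed.

Lemma x1_sub : (x1 <= col_mx x1 x2)%MS.
Proof. by have := sub_line x1 x2 1 0; rewrite scale1r scale0r addr0. Qed.

Lemma x2_sub : (x2 <= col_mx x1 x2)%MS.
Proof. by have := sub_line x1 x2 0 1; rewrite scale1r scale0r add0r. Qed.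

Lemma preimage_eq x (c a' b' : K) : (x <= col_mx x1 x2)%MS ->
  Phi A x = c *: (a' *: a + b' *: b) ->
  exists s t, [/\ x = s *: x1 + t *: x2, s ^+ 2 + g * t ^+ 2 = c * a' & s * t = c * b'].
Proof.
move=> /sub_col2P [s [t ->]]; rewrite PhiL scalerDr !scalerA => e.
have [e1 e2] := indep_coef indab e.
by exists s, t.
Qed.

Lemma decomp z : (z <= col_mx a b)%MS -> exists a' b', z = a' *: a + b' *: b.
Proof. by move/sub_col2P. Qed.

Definition Eset := [:: (2 * sqrtC g) *: a + b; (- (2 * sqrtC g)) *: a + b].

Lemma dc : double_cover_of_line A x1 x2.
Proof.
exists a, b; split.
- exact/indepP/indab.
- by move=> x _ /sub_col2P [s [t ->]]; rewrite PhiL; apply: sub_line.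
- move=> z zn0 /decomp [a' [b' ez]].
  case: (eqVneq b' 0) => [b0|bn0].
  + have an0 : a' != 0.
      by apply: contraNneq zn0 => a0; rewrite ez a0 b0 !scale0r addr0.
    exists x1; split; [exact: x1n0 | exact: x1_sub |].
    exists a'^-1; first by rewrite invr_eq0.
    by rewrite ez b0 scale0r addr0 scalerA mulVf // scale1r.
  + set d := a' ^+ 2 - 4 * b' ^+ 2 * g.
    have hd : sqrtC d ^+ 2 = d by rewrite sqrtCK.
    have [sn0 eP] := root_sol bn0 (root_formula bn0 hd).
    exists ((a' + sqrtC d) / (2 * b') *: x1 + x2); split;
      [exact: comb_n0 | exact: comb_sub |].
    exists ((a' + sqrtC d) / (2 * b') / b'); first by rewrite mulf_neq0 // invr_eq0.
    by rewrite eP ez.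
- exists Eset => z zn0 /decomp [a' [b' ez]] hE.
  case: (eqVneq b' 0) => [b0|bn0].
  + have an0 : a' != 0.
      by apply: contraNneq zn0 => a0; rewrite ez a0 b0 !scale0r addr0.
    have ez' : z = a' *: a by rewrite ez b0 scale0r addr0.
    exists x1, x2; split; [exact: x1n0 | exact: x2n0 | exact: x1_sub | exact: x2_sub |].
    split.
    * move=> [c cn0 e2].
      have [_ /eqP] : c = 0 /\ (0:K) = 1.
        by apply: (indep_coef hind); rewrite !scale0r scale1r addr0 add0r e2.
      by rewrite eq_sym oner_eq0.
    * exists a'^-1; first by rewrite invr_eq0.
      by rewrite ez' scalerA mulVf // scale1r.
    * exists (g / a'); first by rewrite mulf_neq0 // invr_eq0.
      by rewrite h2 ez' scalerA mulfVK.
    * move=> x xn0 xs [c cn0 ex]; rewrite ez in ex.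
      have [s [t [ex' e1 e2]]] := preimage_eq xs ex.
      move: e2; rewrite b0 mulr0 => /eqP; rewrite mulf_eq0 => /orP [] /eqP st0.
      - right; exists t.
          by apply: contraNneq xn0 => t0; rewrite ex' st0 t0 !scale0r addr0.
        by rewrite ex' st0 scale0r add0r.
      - left; exists s.
          by apply: contraNneq xn0 => s0; rewrite ex' st0 s0 !scale0r addr0.
        by rewrite ex' st0 scale0r addr0.
  + set d := a' ^+ 2 - 4 * b' ^+ 2 * g.
    have dn0 : d != 0.
      apply/eqP => d0; set rho := sqrtC g.
      have hr : rho ^+ 2 = g by rewrite sqrtCK.
      have : (a' - 2 * b' * rho) * (a' + 2 * b' * rho) = 0.
        by rewrite -d0 /d -hr; ring.
      move/eqP; rewrite mulf_eq0 => /orP [] h.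
      - apply: (hE ((2 * rho) *: a + b)); first by rewrite mem_head.
        exists b' => //; rewrite ez; move: h; rewrite subr_eq0 => /eqP ->.
        by rewrite scalerDr scalerA mulrA (mulrC b').
      - apply: (hE ((- (2 * rho)) *: a + b)); first by rewrite inE mem_head orbT.
        exists b' => //; rewrite ez; move: h; rewrite addr_eq0 => /eqP ->.
        by rewrite scalerDr scalerA mulrN mulrA (mulrC b').
    set dl := sqrtC d.
    have hd : dl ^+ 2 = d by rewrite sqrtCK.
    have hd' : (- dl) ^+ 2 = d by rewrite sqrrN.
    have [s1n0 eP1] := root_sol bn0 (root_formula bn0 hd).
    have [s2n0 eP2] := root_sol bn0 (root_formula bn0 hd').
    set s1 := (a' + dl) / (2 * b') in s1n0 eP1 *.
    set s2 := (a' + - dl) / (2 * b') in s2n0 eP2 *.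
    exists (s1 *: x1 + x2), (s2 *: x1 + x2); split;
      [exact: comb_n0 | exact: comb_n0 | exact: comb_sub | exact: comb_sub |].
    split.
    * move=> [c cn0 e].
      have [e1 e2] : s2 = c * s1 /\ (1:K) = c.
        by apply: (indep_coef hind); rewrite scale1r e scalerDr scalerA.
      move: e1; rewrite -e2 mul1r => e1.
      have : dl = (s1 - s2) * b' by rewrite /s1 /s2; field; rewrite ?bn0 ?two_neq0.
      rewrite e1 subrr mul0r => dl0.
      by move: dn0; rewrite -hd dl0 expr0n /= eqxx.
    * exists (s1 / b'); first by rewrite mulf_neq0 // invr_eq0.
      by rewrite eP1 ez.
    * exists (s2 / b'); first by rewrite mulf_neq0 // invr_eq0.
      by rewrite eP2 ez.
    * move=> x xn0 xs [c cn0 ex]; rewrite ez in ex.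
      have [s [t [ex' e1 e2]]] := preimage_eq xs ex.
      have tn0 : t != 0.
        apply/eqP => t0; move: e2; rewrite t0 mulr0 => /eqP.
        by rewrite eq_sym mulf_eq0 (negbTE cn0) (negbTE bn0).
      have q : b' * (s / t) ^+ 2 - a' * (s / t) + b' * g = 0.
        have : t ^+ 2 * (b' * (s / t) ^+ 2 - a' * (s / t) + b' * g) =
               b' * (s ^+ 2 + g * t ^+ 2) - a' * (s * t).
          by field.
        rewrite e1 e2 (_ : b' * (c * a') - a' * (c * b') = 0); last by ring.
        by move/eqP; rewrite mulf_eq0 expf_eq0 /= (negbTE tn0) /= => /eqP.
      move: q; rewrite (@quad_factor a' b' dl (s / t) bn0 hd) => /eqP.
      rewrite !mulf_eq0 (negbTE bn0) /= !subr_eq0 => /orP [] /eqP hs.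
      - left; exists t => //.
        by rewrite ex' /s1 -hs scalerDr scalerA (mulrC t) divfK.
      - right; exists t => //.
        by rewrite ex' /s2 -hs scalerDr scalerA (mulrC t) divfK.
Qed.

End GoodLine.
Lemma good_of n m (A : 'I_m -> 'M[K]_n) (x1 x2 : 'rV[K]_n) (g : K) :
  indep x1 x2 -> Phi A x1 != 0 -> g != 0 -> Phi A x2 = g *: Phi A x1 ->
  ~ (exists c, Bf A x1 x2 = c *: Phi A x1) -> good_line A x1 x2.
Proof.
move=> hi ha hg h2 hb; split; first exact/indepP.
- exact: (misses ha hg h2 hb).
- exact: (dc hi ha hg h2 hb).
Qed.

Lemma mmap_horner n (p : {mpoly K[n]}) (h : 'I_n -> {poly K}) x :
  (mmap (@polyC K) h p).[x] = p.@[fun k => (h k).[x]].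
Proof.
rewrite mevalE -horner_evalE /mmap rmorph_sum; apply: eq_bigr => mo _.
rewrite rmorphM /= horner_evalE hornerC /mmap1 rmorph_prod; congr (_ * _).
by apply: eq_bigr => i _; rewrite rmorphXn /= horner_evalE.
Qed.

Definition Qm n (M : 'M[K]_n) : {mpoly K[n]} :=
  \sum_(a < n) \sum_(b < n) M a b *: ('X_a * 'X_b).

Lemma Qm_eval n (M : 'M[K]_n) (x : 'rV[K]_n) : (Qm M).@[fun k => x 0 k] = qform M x.
Proof.
rewrite /Qm /qform mxE raddf_sum /=.
under eq_bigr => a _ do rewrite raddf_sum /=.
under [RHS]eq_bigr => b _ do rewrite mxE mulr_suml.
rewrite exchange_big /=; apply: eq_bigr => a _; apply: eq_bigr => b _.
by rewrite mevalZ mevalM !mevalXU !mxE; ring.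
Qed.

Section Fib.
Variables (n m : nat) (A : 'I_m -> 'M[K]_n) (P : 'rV[K]_n).
Definition SS (z : 'rV[K]_n) := Phi A z != 0 /\ proj_eq (Phi A P) (Phi A z).
Local Notation F := (fibre A P).

Lemma Phi_nz z : Phi A z != 0 -> z != 0.
Proof. by apply: contraNneq => ->; rewrite Phi0. Qed.

Lemma S_F z : SS z -> F z.
Proof. by move=> hz p hp; apply: hp => //; exact: Phi_nz hz.1. Qed.

Lemma line_vanish (x1 x2 : 'rV[K]_n) t0 (be ga : K) (p : {mpoly K[n]}) :
  SS x1 -> (forall s, Phi A (s *: x1 + t0 *: x2) = (s ^+ 2 + be * s + ga) *: Phi A x1) ->
  (forall y, y != 0 -> SS y -> p.@[fun k => y 0 k] = 0) ->
  forall s0, p.@[fun k => (s0 *: x1 + t0 *: x2) 0 k] = 0.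
Proof.
move=> [h1 [c cn0 ec]] hphi hp s0.
pose X' : {poly K} := 'X + s0%:P.
pose G : {poly K} := X' ^+ 2 + be%:P * X' + ga%:P.
pose H : {poly K} := mmap (@polyC K) (fun k => X' * (x1 0 k)%:P + (t0 * x2 0 k)%:P) p.
have HE l : H.[l] = p.@[fun k => ((s0 + l) *: x1 + t0 *: x2) 0 k].
  rewrite mmap_horner; apply: meval_eq => k; rewrite /X' !hornerE !mxE; ring.
have GE l : G.[l] = (s0 + l) ^+ 2 + be * (s0 + l) + ga.
  rewrite /G /X' !hornerE; ring.
have Gn0 : G != 0.
  apply/negP => /eqP G0.
  have e1 := GE (- s0); have e2 := GE (1 - s0); have e3 := GE (-1 - s0).
  rewrite G0 horner0 in e1 e2 e3.
  have : (2:K) = ((s0 + (1 - s0)) ^+ 2 + be * (s0 + (1 - s0)) + ga) +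
     ((s0 + (-1 - s0)) ^+ 2 + be * (s0 + (-1 - s0)) + ga) -
     2 * ((s0 + - s0) ^+ 2 + be * (s0 + - s0) + ga) by ring.
  rewrite -e1 -e2 -e3 !horner0 mulr0 subr0 addr0 => /eqP.
  by rewrite (negbTE two_neq0).
have HG l : (H * G).[l] = 0.
  rewrite hornerM; case: (eqVneq G.[l] 0) => [->|gn]; first by rewrite mulr0.
  have ePz : Phi A ((s0 + l) *: x1 + t0 *: x2) = G.[l] *: Phi A x1 by rewrite hphi GE.
  have Pzn : Phi A ((s0 + l) *: x1 + t0 *: x2) != 0.
    by rewrite ePz scaler_eq0 negb_or gn h1.
  rewrite HE hp ?mul0r //; first exact: Phi_nz.
  split => //; exists (G.[l] * c); first by rewrite mulf_neq0.
  by rewrite ePz ec scalerA.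
have /eqP := poly_all0 HG; rewrite mulf_eq0 (negbTE Gn0) orbF => /eqP H0.
by have := HE 0; rewrite H0 horner0 addr0.
Qed.

Hypothesis nogood : forall u v, ~ good_line A u v.

Lemma line_in (x1 x2 : 'rV[K]_n) (p : {mpoly K[n]}) : SS x1 -> SS x2 ->
  (forall y, y != 0 -> SS y -> p.@[fun k => y 0 k] = 0) ->
  forall s0 t0, p.@[fun k => (s0 *: x1 + t0 *: x2) 0 k] = 0.
Proof.
move=> S1 S2 hp s0 t0.
have [h1 [c1 c1n e1]] := S1; have [h2 [c2 c2n e2]] := S2.
have x1n : x1 != 0 := Phi_nz h1.
set ga := c2 / c1.
have e21 : Phi A x2 = ga *: Phi A x1 by rewrite e1 e2 scalerA divfK.
have gan : ga != 0 by rewrite mulf_neq0 // invr_eq0.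
case: (classic (indep x1 x2)) => hind.
- case: (classic (exists c, Bf A x1 x2 = c *: Phi A x1)) => [[be hbe]|hnb]; last first.
    by case: (nogood (good_of hind h1 gan e21 hnb)).
  apply: (line_vanish (be := be * t0) (ga := ga * t0 ^+ 2) S1 _ hp).
  move=> s; rewrite Phi_comb hbe e21; apply/rowP => j; rewrite !mxE; ring.
- have [s [t [est nz]]] : exists s t, s *: x1 + t *: x2 = 0 /\ ~ (s = 0 /\ t = 0).
    apply: NNPP => hn; apply: hind => s t e; apply: NNPP => hn2; apply: hn.
    by exists s, t.
  have tn : t != 0.
    apply/eqP => t0'; apply: nz; split => //; move: est; rewrite t0' scale0r addr0 => /eqP.
    by rewrite scaler_eq0 (negbTE x1n) orbF => /eqP.
  move/eqP: est; rewrite addrC addr_eq0 => /eqP et.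
  have ex2 : x2 = (- (t^-1 * s)) *: x1.
    by rewrite -[x2]scale1r -(mulVf tn) -scalerA et scalerN scalerA scaleNr.
  apply: (line_vanish (be := 2 * (t0 * - (t^-1 * s))) (ga := (t0 * - (t^-1 * s)) ^+ 2) S1 _ hp).
  move=> s'; rewrite ex2 scalerA -scalerDl Phi_scale; congr (_ *: _); ring.
Qed.

Lemma comb_F (y x : 'rV[K]_n) s t : SS y -> F x -> F (s *: y + t *: x).
Proof.
move=> Sy Fx p hp.
pose q := p \mPo [tuple (s * y 0 i)%:MP + t *: 'X_i | i < n].
have qE (z : 'rV[K]_n) : q.@[fun k => z 0 k] = p.@[fun k => (s *: y + t *: z) 0 k].
  rewrite comp_mpoly_meval; apply: meval_eq => i.
  by rewrite tnth_mktuple mevalD mevalC mevalZ mevalXU !mxE.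
rewrite -qE; apply: Fx => z zn Sz; rewrite qE.
exact: (line_in Sy Sz hp).
Qed.

Definition goodV (V : 'M[K]_n) := forall x, (x <= V)%MS -> x != 0 -> F x.

Lemma goodV0 : goodV 0.
Proof. by move=> x; rewrite submx0 => /eqP ->; rewrite eqxx. Qed.

Lemma goodV_add (V : 'M[K]_n) (y : 'rV[K]_n) : goodV V -> SS y -> goodV (V + y)%MS.
Proof.
move=> gV Sy x /sub_addsmxP [[u1 u2] /= ->] xn.
move: xn; rewrite (mx11_scalar u2) mul_scalar_mx => xn.
case: (eqVneq (u1 *m V) 0) => [v0|vn].
- have := comb_F (u2 0 0) 0 Sy (S_F Sy); rewrite scale0r addr0.
  by rewrite v0 add0r.
- have Fv : F (u1 *m V) by apply: gV => //; exact: submxMl.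
  by have := comb_F (u2 0 0) 1 Sy Fv; rewrite scale1r addrC.
Qed.

Lemma maxV : exists W : 'M[K]_n, goodV W /\ forall y, SS y -> (y <= W)%MS.
Proof.
suff : forall k (V : 'M[K]_n), (n - \rank V <= k)%N -> goodV V ->
    exists W : 'M[K]_n, goodV W /\ forall y, SS y -> (y <= W)%MS.
  by move=> /(_ n 0); apply => //; [exact: leq_subr | exact: goodV0].
elim=> [|k IH] V hk gV.
  exists V; split => // y _; apply: submx_full.
  rewrite /row_full eqn_leq rank_leq_col /=.
  by move: hk; rewrite leqn0 subn_eq0.
case: (classic (forall y, SS y -> (y <= V)%MS)) => [h|h]; first by exists V.
have [y [Sy ny]] : exists y, SS y /\ ~~ (y <= V)%MS.
  apply: NNPP => hn; apply: h => y Sy; apply: NNPP => hy; apply: hn.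
  by exists y; split => //; apply/negP.
apply: (IH (V + y)%MS); last exact: goodV_add.
have hlt : (\rank V < \rank (V + y))%N.
  have [hle heq] := mxrank_leqif_sup (addsmxSl V y).
  rewrite ltn_neqAle hle andbT heq; apply/negP => hV.
  by move/negP: ny; apply; exact: submx_trans (addsmxSr V y) hV.
have := rank_leq_col (V + y)%MS.
move: hk hlt; set a := \rank V; set b := \rank (V + y)%MS => hk hlt hb.
by rewrite leq_subLR; rewrite leq_subLR in hk; apply: leq_trans hk _; rewrite addnS -addSn leq_add2r.
Qed.

Lemma fib_linear : is_linear_space F.
Proof.
have [W [gW hW]] := maxV.
exists W => x xn; split; last by move=> hx; exact: gW.
move=> Fx; rewrite submxE; apply/eqP/rowP => k.
pose pk : {mpoly K[n]} := \sum_(i < n) (cokermx W) i k *: 'X_i.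
have pkE (z : 'rV[K]_n) : pk.@[fun j => z 0 j] = (z *m cokermx W) 0 k.
  rewrite /pk raddf_sum mxE /=; apply: eq_bigr => i _.
  by rewrite mevalZ mevalXU mulrC.
rewrite [RHS]mxE -pkE; apply: Fx => z zn Sz; rewrite pkE.
have /eqP -> : z *m cokermx W == 0 by rewrite -submxE; exact: hW.
by rewrite mxE.
Qed.

End Fib.

Lemma cross_prop m (a b : 'rV[K]_m) : a != 0 -> b != 0 ->
  (forall j k, a 0 k * b 0 j = a 0 j * b 0 k) -> proj_eq a b.
Proof.
move=> an bn h.
have [j0 hj] : exists j, a 0 j != 0.
  apply: NNPP => hn; move/eqP: an; apply; apply/rowP => j; rewrite mxE.
  apply: NNPP => hj; apply: hn; exists j; exact/eqP.
have hb k : b 0 k = b 0 j0 / a 0 j0 * a 0 k.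
  apply: (mulfI hj); rewrite -h; field.
  by rewrite hj.
exists (b 0 j0 / a 0 j0).
  rewrite mulf_neq0 ?invr_eq0 //; apply/eqP => b0; move/eqP: bn; apply.
  by apply/rowP => k; rewrite hb b0 !mul0r mxE.
by apply/rowP => k; rewrite mxE hb.
Qed.

Lemma fibre_cross n m (A : 'I_m -> 'M[K]_n) P x : fibre A P x ->
  forall j k, (Phi A P) 0 k * (Phi A x) 0 j = (Phi A P) 0 j * (Phi A x) 0 k.
Proof.
move=> hx j k.
pose pc := (Phi A P) 0 k *: Qm (A j) - (Phi A P) 0 j *: Qm (A k).
have pcE (z : 'rV[K]_n) : pc.@[fun i => z 0 i] =
    (Phi A P) 0 k * (Phi A z) 0 j - (Phi A P) 0 j * (Phi A z) 0 k.
  by rewrite mevalB !mevalZ !Qm_eval [(Phi A z) 0 j]mxE [(Phi A z) 0 k]mxE.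
apply/eqP; rewrite -subr_eq0 -pcE; apply/eqP; apply: hx => z zn [_ [c cn ec]].
by rewrite pcE ec !mxE; ring.
Qed.

Lemma avoid m (w1 w2 : 'rV[K]_m) : indep w1 w2 -> forall E : seq 'rV[K]_m,
  exists B, forall t : nat, (B <= t)%N -> forall e, e \in E -> ~ proj_eq e (w1 + t%:R *: w2).
Proof.
move=> hi; elim=> [|e E [B hB]]; first by exists 0%N.
have [B' hB'] : exists B', forall t : nat, (B' <= t)%N -> ~ proj_eq e (w1 + t%:R *: w2).
  case: (classic (exists t0 : nat, proj_eq e (w1 + t0%:R *: w2))) => [[t0 [c0 c0n e0]]|hn].
  - exists t0.+1 => t ht [c cn ec].
    have : 1 *: w1 + t%:R *: w2 = (c / c0) *: w1 + (c / c0 * t0%:R) *: w2.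
      by rewrite scale1r ec -(scalerA (c / c0) (t0%:R)) -scalerDr e0 scalerA divfK.
    move=> /(indep_coef hi) [e1]; rewrite -e1 mul1r => /eqP; rewrite eqr_nat => /eqP tt0.
    by rewrite tt0 ltnn in ht.
  - by exists 0%N => t _ h; apply: hn; exists t.
exists (maxn B B') => t ht e'; rewrite inE => /orP [/eqP ->|he'].
  by apply: hB'; exact: leq_trans (leq_maxr _ _) ht.
by apply: hB => //; exact: leq_trans (leq_maxl _ _) ht.
Qed.

Lemma easy n m (A : 'I_m -> 'M[K]_n) u v : good_line A u v ->
  exists P, [/\ P != 0, Phi A P != 0 & ~ is_linear_space (fibre A P)].
Proof.
move=> [hl hm [w1 [w2 [hw hin hsurj [E hE]]]]].
have hiw : indep w1 w2 by apply/indepP.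
have [B hB] := avoid hiw E.
set y := w1 + B%:R *: w2.
have yn : y != 0.
  apply/eqP => y0; have [/eqP] : (1:K) = 0 /\ (B%:R : K) = 0.
    by apply: hiw; rewrite scale1r.
  by rewrite oner_eq0.
have ys : (y <= col_mx w1 w2)%MS by have := sub_line w1 w2 1 B%:R; rewrite scale1r.
have [x1 [x2 [x1n x2n x1s x2s [hnp [c1 c1n e1] [c2 c2n e2] huniq]]]] :=
  hE y yn ys (hB B (leqnn B)).
have h1 : Phi A x1 != 0 := hm x1 x1n x1s.
have h2 : Phi A x2 != 0 := hm x2 x2n x2s.
exists x1; split => // -[V hV].
have S1 : SS A x1 x1 by split => //; exists 1; rewrite ?oner_eq0 ?scale1r.
have S2 : SS A x1 x2.
  split => //; exists (c2 / c1); first by rewrite mulf_neq0 // invr_eq0.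
  by rewrite e1 e2 scalerA divfK.
have x1V : (x1 <= V)%MS by apply/(hV x1 x1n); exact: S_F.
have x2V : (x2 <= V)%MS by apply/(hV x2 x2n); exact: S_F.
have hix : indep x1 x2.
  move=> s t e; case: (eqVneq t 0) => [t0|tn].
    move: e; rewrite t0 scale0r addr0 => /eqP; rewrite scaler_eq0 (negbTE x1n) orbF.
    by move=> /eqP.
  exfalso; apply: hnp; exists (- (t^-1 * s)).
    rewrite oppr_eq0 mulf_neq0 ?invr_eq0 //; apply/eqP => s0.
    move: e; rewrite s0 scale0r add0r => /eqP; rewrite scaler_eq0 (negbTE tn).
    by rewrite (negbTE x2n).
  move/eqP: e; rewrite addrC addr_eq0 => /eqP et.
  by rewrite -[x2]scale1r -(mulVf tn) -scalerA et scalerN scalerA scaleNr.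
have sxu : (col_mx x1 x2 <= col_mx u v)%MS by rewrite col_mx_sub x1s x2s.
have [_ heq] := mxrank_leqif_sup sxu.
have cuv : (col_mx u v <= col_mx x1 x2)%MS.
  by rewrite -heq ((indepP _ _).2 hix) hl.
have cxV : (col_mx x1 x2 <= V)%MS by rewrite col_mx_sub x1V x2V.
have w2n : w2 != 0 := indep_neq0l (indep_sym hiw).
have w2s : (w2 <= col_mx w1 w2)%MS.
  by have := sub_line w1 w2 0 1; rewrite scale0r add0r scale1r.
have [x [xn xs [c cn ec]]] := hsurj w2 w2n w2s.
have xV : (x <= V)%MS by apply: submx_trans xs (submx_trans cuv cxV).
have Fx : fibre A x1 x by apply/(hV x xn).
have [k kn ek] := cross_prop h1 (hm x xn xs) (fibre_cross Fx).
have : 0 *: w1 + c *: w2 = (k * c1) *: w1 + (k * c1 * B%:R) *: w2.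
  by rewrite scale0r add0r -ec ek e1 /y scalerA scalerDr scalerA.
move=> /(indep_coef hiw) [/eqP]; rewrite eq_sym mulf_eq0 (negbTE kn) (negbTE c1n).
by [].
Qed.

End Main.

Theorem corollary4p4 (R : realType) (r alpha : nat)
  (A : 'I_alpha.+1 -> 'M[R[i]]_r.+1) :
  lin_indep_quadrics A ->
  ((forall u v : 'rV[R[i]]_r.+1, ~ in_W A u v) <->
   (forall P : 'rV[R[i]]_r.+1, P != 0 -> Phi A P != 0 ->
      is_linear_space (fibre A P))).
Proof.
move=> _; split.
- move=> hW P Pn hP; apply: fib_linear => u v hg; apply: (hW u v); split.
    by case: hg.
  by move=> p hp; apply: hp.
- move=> hlin u v [hl hp].
  case: (classic (exists u' v', good_line A u' v')) => [[u' [v' hg]]|hn].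
  + have [P [Pn PPn hnl]] := easy hg; exact: hnl (hlin P Pn PPn).
  + have := hp 1 (fun u' v' hg => False_ind _ (hn (ex_intro _ u' (ex_intro _ v' hg)))).
    by rewrite meval1 => /eqP; rewrite oner_eq0.
Qed.
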